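(* Let the cell types be indexed $\{0,1,\dots,n\}$ with $0$ the non-resistant type, and let $\boldsymbol{\alpha}_{(0)}=(\alpha_{(0,0)},\alpha_{(0,1)},\dots,\alpha_{(0,n)})$ be a probability vector. Define a random process $\boldsymbol{\pi}(t)\in\mathbb{Z}_+^{n+1}$, $t\in\mathbb{Z}_+$, by $\boldsymbol{\pi}(0)=\mathbf{e}_0$ (a single non-resistant cell) and $$\boldsymbol{\pi}(t+1)\sim \mathrm{MD}\big(\pi_0(t),\boldsymbol{\alpha}_{(0)}\big)+2\boldsymbol{\pi}(t)-\mathbf{e}_0\circ\boldsymbol{\pi}(t),$$ where $\mathrm{MD}(m,\mathbf{p})$ denotes a multinomial random vector with $m$ trials and outcome probabilities $\mathbf{p}$ (drawn conditionally on $\boldsymbol{\pi}(t)$), $\mathbf{e}_0$ is the first unit vector and $\circ$ is the componentwise product. Then for every $t\in\mathbb{Z}_+$, $\mathbb{E}(\pi_0(t))=(\alpha_{(0,0)}+1)^t$, and for every resistant type $q\ne0$, $\mathbb{E}(\pi_q(t+1))=\sum_{k=0}^{t}2^k\alpha_{(0,q)}(\alpha_{(0,0)}+1)^{t-k}$.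
   Context: This is a branching model of tumor growth: $\pi_q(t)$ is the number of cells of type $q$ at generation $t$; non-resistant cells may give rise to a mutated (single-drug resistant) daughter cell of type $q$ with probability $\alpha_{(0,q)}$, while resistant cells simply double each generation. *)

(* Defs.v *)
(* The process pi(t) is a finite-state Markov chain, so its law
   at each time is a finitely supported distribution; we represent such a law as
   a finite list of weighted outcomes (state, probability) (a mixture).  *)
From mathcomp Require Import all_boot all_order all_algebra.
Set Implicit Arguments. Unset Strict Implicit. Unset Printing Implicit Defensive.
Import Order.TTheory GRing.Theory Num.Theory.
Local Open Scope ring_scope.

Notation state n := {ffun 'I_n.+1 -> nat}.

Definition fdist (R : Type) (n : nat) := seq (state n * R).

Definition expect (R : numDomainType) (n : nat) (d : fdist R n) (f : state n -> R) : R :=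
  \sum_(p <- d) p.2 * f p.1.

(* multinomial MD(m, alpha): the sum of m i.i.d. categorical unit vectors e_{c_j},
   with P(c_j = i) = alpha i *)
Fixpoint multinomial (R : numDomainType) (n : nat) (alpha : 'I_n.+1 -> R) (m : nat)
  : seq (state n * R) :=
  match m with
  | 0 => [:: ([ffun => 0%N], 1)]
  | m'.+1 =>
      flatten [seq [seq ([ffun j => (p.1 j + (j == i))%N], p.2 * alpha i)
                   | i <- enum 'I_n.+1]
              | p : state n * R <- multinomial alpha m']
  end.

Definition det_part (n : nat) (x : state n) : state n :=
  [ffun j => (2 * x j - (j == ord0) * x j)%N].

Fixpoint law (R : numDomainType) (n : nat) (alpha : 'I_n.+1 -> R) (t : nat) : seq (state n * R) :=
  match t with
  | 0 => [:: ([ffun j => (j == ord0 : nat)], 1)]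
  | t'.+1 =>
      flatten [seq [seq ([ffun j => (v.1 j + det_part x.1 j)%N], x.2 * v.2)
                   | v : state n * R <- multinomial alpha (x.1 ord0)]
              | x : state n * R <- law alpha t']
  end.

(* Main.v *)
Require Import Defs.
From mathcomp Require Import all_boot all_order all_algebra.
From mathcomp Require Import ring.
Import Order.TTheory GRing.Theory Num.Theory.
Local Open Scope ring_scope.

Section S.
Variables (R : realFieldType) (n : nat) (alpha : 'I_n.+1 -> R).
Hypothesis alpha_sum1 : \sum_i alpha i = 1.

Lemma mult_mass m : \sum_(p <- multinomial alpha m) p.2 = 1.
Proof.
elim: m => [|m IH] /=; first by rewrite big_seq1.
rewrite big_flatten big_map -IH; apply: eq_bigr => p _.
by rewrite big_map /= big_enum /= -mulr_sumr alpha_sum1 mulr1.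
Qed.

Lemma mult_mean m j :
  \sum_(p <- multinomial alpha m) p.2 * (p.1 j)%:R = m%:R * alpha j.
Proof.
elim: m => [|m IH] /=; first by rewrite big_seq1 ffunE mul1r mul0r.
rewrite big_flatten big_map.
transitivity (\sum_(p <- multinomial alpha m) (p.2 * (p.1 j)%:R + p.2 * alpha j)).
  apply: eq_bigr => p _; rewrite big_map /= big_enum /=.
  under eq_bigr do rewrite ffunE natrD mulrDr.
  rewrite big_split /= -big_distrl -big_distrr /= alpha_sum1 mulr1; congr (_ + _).
  rewrite (bigD1 j) //= eqxx mulr1 big1 ?addr0 // => i /negbTE.
  by rewrite eq_sym => ->; rewrite mulr0.
by rewrite big_split /= IH -big_distrl /= mult_mass mulrSr mulrDl mul1r.
Qed.

Lemma law_mass t : \sum_(x <- law alpha t) x.2 = 1.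
Proof.
elim: t => [|t IH] /=; first by rewrite big_seq1.
rewrite big_flatten big_map -IH; apply: eq_bigr => x _.
by rewrite big_map /= -mulr_sumr mult_mass mulr1.
Qed.

Lemma law_step t j :
  expect (law alpha t.+1) (fun x => ((x j)%:R : R)) =
  \sum_(x <- law alpha t) x.2 * ((x.1 ord0)%:R * alpha j + (det_part x.1 j)%:R).
Proof.
rewrite /expect /= big_flatten big_map; apply: eq_bigr => x _.
rewrite big_map /=.
under eq_bigr do rewrite ffunE natrD -mulrA mulrDr.
by rewrite -mulr_sumr big_split /= -big_distrl /= mult_mean mult_mass mul1r.
Qed.
End S.

Lemma det0 n (x : state n) : det_part x ord0 = x ord0.
Proof. by rewrite ffunE eqxx mul1n mul2n -addnn addnK. Qed.

Lemma detq n (x : state n) q : q != ord0 -> det_part x q = (2 * x q)%N.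
Proof. by move=> /negbTE Hq; rewrite ffunE Hq mul0n subn0. Qed.

Theorem proposition1 (R : realFieldType) (n : nat) (alpha : 'I_n.+1 -> R)
  (alpha_ge0 : forall i, 0 <= alpha i) (alpha_sum1 : \sum_i alpha i = 1) :
  (forall t : nat, expect (law alpha t) (fun x => ((x ord0)%:R : R)) = (alpha ord0 + 1) ^+ t)
  /\
  (forall (q : 'I_n.+1) (t : nat), q != ord0 ->
     expect (law alpha t.+1) (fun x => ((x q)%:R : R))
     = \sum_(k < t.+1) 2 ^+ k * alpha q * (alpha ord0 + 1) ^+ (t - k)).
Proof.
have E0 : forall t : nat, expect (law alpha t) (fun x => ((x ord0)%:R : R)) = (alpha ord0 + 1) ^+ t.
  elim=> [|t IH]; first by rewrite /expect big_seq1 /= ffunE eqxx mul1r expr0.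
  rewrite law_step // exprS -IH /expect.
  under eq_bigr do rewrite det0.
  rewrite mulr_sumr; apply: eq_bigr => x _; ring.
split=> // q t Hq.
elim: t => [|t IH].
  rewrite law_step // /= big_seq1 /= detq // !ffunE /= (negbTE Hq) muln0.
  by rewrite big_ord1 expr0 /= !mul1r addr0 mulr1.
rewrite law_step //.
transitivity (alpha q * expect (law alpha t.+1) (fun x => ((x ord0)%:R : R))
   + 2 * expect (law alpha t.+1) (fun x => ((x q)%:R : R))).
  rewrite /expect !mulr_sumr -big_split /=; apply: eq_bigr => x _.
  rewrite detq // natrM; ring.
rewrite E0 IH [in RHS]big_ord_recl /= expr0 mul1r subn0 mulr_sumr; congr (_ + _).
apply: eq_bigr => k _; rewrite /bump /= add1n subSS exprS; ring.
Qed.
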